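(* Let $(\Omega,\mathcal{F},P)$ be a probability space with filtration $\{\mathcal{F}_t\}_{0\le t\le T}$. Let $(\delta_{st})_{0\le s\le t\le T}$ be nonnegative real numbers such that $\delta_{rs}\delta_{st}+\delta_{rs}+\delta_{st}=\delta_{rt}$ for all $r\le s\le t$. For $s\le t$ define \[\mathcal{Q}_{st}=\Big\{Q\ll P \text{ on } \mathcal{F}_t:\ Q|_{\mathcal{F}_s}=P,\ \frac{dQ}{dP}=1+g_{st}\text{ for some } g_{st}\in L^2(\mathcal{F}_t)\text{ with } E[g_{st}^2\mid\mathcal{F}_s]\le\delta_{st}^2\Big\}.\] Then: (1) for all $r\le s\le t$, $Q\in\mathcal{Q}_{rs}$ and $R\in\mathcal{Q}_{st}$, the probability measure $S\ll P$ with $\frac{dS}{dP}=\frac{dQ}{dP}\frac{dR}{dP}$ belongs to $\mathcal{Q}_{rt}$; (2) for all $A\in\mathcal{F}_s$ and $Q_1,Q_2\in\mathcal{Q}_{st}$, there exists $Q\in\mathcal{Q}_{st}$ with $\frac{dQ}{dP}=\frac{dQ_1}{dP}1_A+\frac{dQ_2}{dP}1_{A^c}$. *)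

(* Defs.v *)
From HB Require Import structures.
From mathcomp Require Import all_boot all_order all_algebra.
From mathcomp Require Import all_classical all_reals all_analysis.
Set Implicit Arguments. Unset Strict Implicit. Unset Printing Implicit Defensive.
Import Order.TTheory GRing.Theory Num.Theory.
Import numFieldNormedType.Exports.
Local Open Scope classical_set_scope.
Local Open Scope ring_scope.

Definition Gmeas d (T : measurableType d) (R : realType)
  (G : set (set T)) (f : T -> R) : Prop :=
  forall B : set R, measurable B -> G (f @^-1` B).

Definition is_cond_exp d (T : measurableType d) (R : realType)
  (P : probability T R) (G : set (set T)) (X Y : T -> R) : Prop :=
  [/\ Gmeas G Y, P.-integrable setT (EFin \o Y) &
      forall A, G A -> (\int[P]_(x in A) (Y x)%:E = \int[P]_(x in A) (X x)%:E)%E].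

Definition is_filtration d (T : measurableType d) (R : realType)
  (Tend : R) (F : R -> set (set T)) : Prop :=
  (forall t, 0 <= t <= Tend -> sigma_algebra setT (F t)) /\
  (forall t, 0 <= t <= Tend -> forall A, F t A -> measurable A) /\
  (forall s t, 0 <= s -> s <= t -> t <= Tend -> forall A, F s A -> F t A).

(* The set Q_{st}, each measure Q << P on F_t being represented by its
   Radon-Nikodym density D = dQ/dP (an F_t-measurable function):
   Q(A) = \int_A D dP for A in F_t. *)
Definition Qset d (T : measurableType d) (R : realType)
  (P : probability T R) (F : R -> set (set T)) (delta : R -> R -> R)
  (s t : R) (D : T -> R) : Prop :=
  [/\ Gmeas (F t) D,
      {ae P, forall x, 0 <= D x},
      (forall A, F s A -> (\int[P]_(x in A) (D x)%:E = P A)%E) &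
      exists g : T -> R,
        [/\ Gmeas (F t) g,
            P.-integrable setT (fun x => ((g x) ^+ 2)%:E),
            (forall x, D x = 1 + g x) &
            exists Y : T -> R,
              is_cond_exp P (F s) (fun x => (g x) ^+ 2) Y /\
              {ae P, forall x, Y x <= (delta s t) ^+ 2}]].

(* Main.v *)
Require Import Defs.
From HB Require Import structures.
From mathcomp Require Import all_boot all_order all_algebra.
From mathcomp Require Import all_classical all_reals all_analysis.
From mathcomp Require Import measurable_realfun.
From mathcomp Require Import ring lra.
Import Order.TTheory GRing.Theory Num.Theory.
Import numFieldNormedType.Exports.
Import HBNNSimple.
Local Open Scope classical_set_scope.
Local Open Scope ring_scope.

Section TG.
Context d (T : measurableType d) (R : realType).
Variable G : set (set T).
Hypothesis sG : sigma_algebra setT G.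
Hypothesis Gm : forall A, G A -> measurable A.

Local Notation TG := (g_sigma_algebraType G).

Lemma TG_measE : (measurable : set (set TG)) = G.
Proof. exact: measurable_g_measurableTypeE. Qed.

Lemma GmeasP (f : T -> R) : Gmeas G f <-> measurable_fun [set: TG] (f : TG -> R).
Proof.
split.
- move=> hf _ B mB; rewrite setTI TG_measE; exact: hf.
- move=> hf B mB; have := hf measurableT B mB; rewrite setTI TG_measE //.
Qed.

Lemma TG_meas_fun (f : TG -> R) : measurable_fun [set: TG] f ->
  measurable_fun [set: T] (f : T -> R).
Proof.
move=> hf _ B mB; rewrite setTI; apply: Gm.
have := hf measurableT B mB; rewrite setTI TG_measE //.
Qed.

Lemma Gmeas_meas (f : T -> R) : Gmeas G f -> measurable_fun [set: T] f.
Proof. by move=> /GmeasP; exact: TG_meas_fun. Qed.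

Lemma id_TG_meas : measurable_fun [set: T] (fun x : T => (x : TG)).
Proof.
move=> _ B mB; rewrite setTI; apply: Gm; move: mB; rewrite TG_measE //.
Qed.

End TG.
Arguments TG_measE {d T}. Arguments GmeasP {d T R}. Arguments TG_meas_fun {d T R}.
Arguments Gmeas_meas {d T R}. Arguments id_TG_meas {d T}.


Section Key.
Context d (T : measurableType d) (R : realType).
Variable G : set (set T).
Hypothesis sG : sigma_algebra setT G.
Hypothesis Gm : forall A, G A -> measurable A.
Variable mu : {measure set T -> \bar R}.

Local Notation TG := (g_sigma_algebraType G).

Lemma simple_int (s : {nnsfun TG >-> R}) (X : T -> R) :
  measurable_fun setT X -> (forall x, 0 <= X x) ->
  (\int[mu]_x ((s x)%:E * (X x)%:E) =
   \sum_(y \in range s) (y%:E * \int[mu]_(x in (s @^-1` [set y] : set T)) (X x)%:E))%E.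
Proof.
move=> mX X0.
have mpre y : measurable (s @^-1` [set y] : set T).
  apply: Gm; have := @measurable_sfunP _ _ TG R s [set y] (measurable_set1 y).
  by rewrite (TG_measE _ sG).
transitivity (\int[mu]_x (\sum_(y \in range s)
    ((y * \1_(s @^-1` [set y]) x)%:E * (X x)%:E)))%E.
  apply: eq_integral => x _.
  rewrite -ge0_mule_fsuml => [|y]; last exact: nnfun_muleindic_ge0.
  by rewrite fsumEFin // (fimfunE s x).
rewrite (@ge0_integral_fsum _ _ _ mu setT measurableT _
  (fun y x => ((y * \1_(s @^-1` [set y]) x)%:E * (X x)%:E)%E))//; last 2 first.
  - move=> y; apply: emeasurable_funM; apply/measurable_EFinP => //.
    apply: measurable_funM => //; exact: measurable_indic.
  - move=> y x _; rewrite mule_ge0 ?lee_fin//; exact: nnfun_muleindic_ge0.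
apply: eq_fsbigr => y ys.
under eq_integral do rewrite EFinM -muleA.
rewrite ge0_integralZl//; last 3 first.
  - apply: emeasurable_funM; apply/measurable_EFinP => //; exact: measurable_indic.
  - by move=> x _; rewrite mule_ge0 ?lee_fin.
  - by move: ys; rewrite inE => -[x _ <-]; rewrite lee_fin; exact: fun_ge0.
congr (_ * _)%E.
rewrite [RHS]integral_mkcond; apply: eq_integral => x _.
by rewrite epatch_indic /= muleC.
Qed.


Lemma key (X1 X2 : T -> R) : measurable_fun setT X1 -> measurable_fun setT X2 ->
  (forall x, 0 <= X1 x) -> (forall x, 0 <= X2 x) ->
  (forall A, G A -> \int[mu]_(x in A) (X1 x)%:E = \int[mu]_(x in A) (X2 x)%:E)%E ->
  forall h : T -> R, Gmeas G h -> (forall x, 0 <= h x) ->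
  (\int[mu]_x ((h x)%:E * (X1 x)%:E) = \int[mu]_x ((h x)%:E * (X2 x)%:E))%E.
Proof.
move=> mX1 mX2 X10 X20 hX h mh h0.
have mhT : measurable_fun [set: TG] (EFin \o h : TG -> \bar R).
  by apply/measurable_EFinP; apply/(GmeasP _ sG).
pose s := nnsfun_approx (measurableT : measurable [set: TG]) mhT.
have LIM (X : T -> R) : measurable_fun setT X -> (forall x, 0 <= X x) ->
    (\int[mu]_x ((h x)%:E * (X x)%:E) =
     limn (fun n => \int[mu]_x ((s n x)%:E * (X x)%:E)))%E.
  move=> mX X0; rewrite -monotone_convergence //.
  - apply: eq_integral => x _; apply/esym/cvg_lim => //.
    apply: cvgeZr => //.
    have := (@cvg_nnsfun_approx _ TG R setT measurableT (EFin \o h) mhT).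
    move=> /(_ _ x I); apply => y _ /=; rewrite lee_fin; exact: h0.
  - move=> n; apply: emeasurable_funM; apply/measurable_EFinP => //.
    apply: (TG_meas_fun _ sG Gm); exact: measurable_funP.
  - by move=> n x _; rewrite mule_ge0 ?lee_fin.
  - move=> x _ a b ab; rewrite lee_wpmul2r ?lee_fin//.
    by have /lefP := @nd_nnsfun_approx _ TG R setT measurableT _ mhT a b ab; apply.
rewrite (LIM X1) // (LIM X2) //; congr (limn _); apply/funext => n.
rewrite !simple_int //; apply: eq_fsbigr => y _; congr (_ * _)%E.
apply: hX; have := @measurable_sfunP _ _ TG R (s n) [set y] (measurable_set1 y).
by rewrite (TG_measE _ sG).
Qed.

End Key.
Arguments key {d T R}. Arguments simple_int {d T R}.


Section CE.
Context d (T : measurableType d) (R : realType).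
Variable G : set (set T).
Hypothesis sG : sigma_algebra setT G.
Hypothesis Gm : forall A, G A -> measurable A.
Variable P : probability T R.

Local Notation TG := (g_sigma_algebraType G).

Lemma exist_ce (X : T -> R) : measurable_fun setT X -> (forall x, 0 <= X x) ->
  P.-integrable setT (EFin \o X) -> exists Y, is_cond_exp P G X Y.
Proof.
move=> mX X0 iX.
pose idT : T -> TG := fun x => x.
have midT : measurable_fun setT idT by exact: (id_TG_meas _ sG Gm).
pose idm : {mfun T >-> TG} := HB.pack idT (isMeasurableFun.Build _ _ _ _ idT midT).
pose mu : {sigma_finite_measure set TG -> \bar R} := distribution P idm.
pose nuf : set TG -> \bar R := fun A => (\int[P]_(x in A) (X x)%:E)%E.
have nu0 : nuf set0 = 0%E by rewrite /nuf integral_set0.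
have mTG (A : set TG) : measurable A -> measurable (A : set T).
  by move=> mA; apply: Gm; rewrite -(TG_measE _ sG).
have nufin (A : set TG) : measurable A -> nuf A \is a fin_num.
  move=> mA; apply: integrable_fin_num => //; first exact: mTG.
  by apply: integrableS iX => //; exact: mTG.
have nussa : semi_sigma_additive nuf.
  move=> F mF tF mUF; rewrite /nuf.
  apply: (@semi_sigma_additive_nng_induced _ T R P (EFin \o X)) => //.
  - by apply/measurable_EFinP.
  - by move=> n; exact: mTG.
  - exact: mTG.
pose nu : {charge set TG -> \bar R} := HB.pack nuf (isCharge.Build _ _ _ nuf nu0 nufin nussa).
have numu : nu `<< mu.
  apply/null_content_dominatesP => A mA muA0.
  rewrite /= /nuf; apply: null_set_integral => //; first exact: mTG.
  apply/measurable_EFinP; apply: measurable_funTS mX.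
have iF := Radon_Nikodym_integrable numu.
set F := Radon_Nikodym nu mu in iF.
have mF : measurable_fun setT F by exact: measurable_int iF.
have finF x : F x \is a fin_num by exact: Radon_Nikodym_fin_num.
have mFT : measurable_fun [set: T] (F : T -> \bar R).
  exact: (measurableT_comp mF midT).
have iFT : P.-integrable [set: T] (F : T -> \bar R).
  apply/integrableP; split => //.
  move/integrableP : iF => [_]; apply: le_lt_trans; rewrite le_eqVlt; apply/orP; left; apply/eqP.
  rewrite /mu /distribution ge0_integral_pushforward //.
  - by apply: measurableT_comp => //; exact: measurable_abse.
exists (fun x : T => fine (F x)); split.
- apply/(GmeasP _ sG); exact: (measurableT_comp (fine_measurable _) mF).
- apply: (eq_integrable measurableT (F : T -> \bar R)) iFT => x _ /=; exact/esym/fineK.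
- move=> A GA.
  have mA : measurable (A : set TG) by rewrite (TG_measE _ sG).
  transitivity (nu A); last by [].
  rewrite (Radon_Nikodym_integral numu mA) /mu /distribution integral_pushforward //.
    by apply: eq_integral => x _; rewrite /= fineK.
  by apply: integrableS iFT => //; exact: mTG.
Qed.

Lemma ae_le_of_int (Y : T -> R) (c : R) : Gmeas G Y ->
  P.-integrable setT (EFin \o Y) ->
  (forall B, G B -> \int[P]_(x in B) (Y x)%:E <= c%:E * P B)%E ->
  {ae P, forall x, Y x <= c}.
Proof.
move=> mY iY hB.
pose B := Y @^-1` `]c, +oo[.
have GB : G B by apply: mY; exact: measurable_itv.
have mB := Gm _ GB.
have mYT : measurable_fun setT Y by exact: (Gmeas_meas _ sG Gm).
have iYB : P.-integrable B (EFin \o Y) by exact: integrableS iY.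
have icB : P.-integrable B (EFin \o cst c) by exact: finite_measure_integrable_cst.
have mf : measurable_fun B (fun x => (Y x - c)%:E).
  apply/measurable_EFinP; apply: measurable_funB => //; exact: measurable_funTS.
have H0 : (\int[P]_(x in B) `|(Y x - c)%:E| = 0)%E.
  apply/eqP; rewrite eq_le integral_ge0 ?andbT; last by move=> x _; exact: abse_ge0.
  rewrite (eq_integral (fun x => (Y x)%:E - (cst c x)%:E))%E; last first.
    move=> x; rewrite inE /B /= in_itv /= andbT => cY.
    by rewrite ger0_norm ?subr_ge0 ?(ltW cY).
  rewrite integralB_EFin // (_ : (\int[P]_(x in B) (cst c x)%:E)%E = (c%:E * P B)%E); last exact: (integral_cst P mB c%:E).
  rewrite sube_le0; exact: hB.
have := (proj1 (ae_eq_integral_abs P mB mf)) H0.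
apply: filterS => x /= Hx; rewrite leNgt; apply/negP => cY.
have BX : B x by rewrite /B /= in_itv /= andbT.
have /eqP := Hx BX; rewrite eqe subr_eq0 => /eqP Yc.
by move: cY; rewrite Yc ltxx.
Qed.

End CE.
Arguments exist_ce {d T R}. Arguments ae_le_of_int {d T R}.


Section Helpers.
Context d (T : measurableType d) (R : realType).
Variable P : probability T R.

Lemma intD (B : set T) (f1 f2 : T -> R) : measurable B ->
  P.-integrable B (EFin \o f1) -> P.-integrable B (EFin \o f2) ->
  (\int[P]_(x in B) (f1 x + f2 x)%:E = \int[P]_(x in B) (f1 x)%:E + \int[P]_(x in B) (f2 x)%:E)%E.
Proof.
move=> mB i1 i2; rewrite -(integralD_EFin mB i1 i2).
by apply: eq_integral => x _.
Qed.

Lemma intZ (B : set T) (f : T -> R) (k : R) : measurable B ->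
  P.-integrable B (EFin \o f) ->
  (\int[P]_(x in B) (k * f x)%:E = k%:E * \int[P]_(x in B) (f x)%:E)%E.
Proof.
move=> mB i; rewrite -(integralZl mB i); by apply: eq_integral => x _.
Qed.

Lemma int1 (B : set T) : measurable B -> (\int[P]_(x in B) (1:R)%:E = P B)%E.
Proof. move=> mB; rewrite -[RHS]mul1e; exact: (integral_cst P mB 1%:E). Qed.

Lemma intc (B : set T) (c : R) : measurable B -> (\int[P]_(x in B) c%:E = c%:E * P B)%E.
Proof. move=> mB; exact: (integral_cst P mB c%:E). Qed.

Lemma integrable_cstP (B : set T) (c : R) : measurable B -> P.-integrable B (EFin \o cst c).
Proof. move=> mB; exact: finite_measure_integrable_cst. Qed.

Lemma L2int (g : T -> R) : measurable_fun setT g ->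
  P.-integrable setT (EFin \o (fun x => g x ^+ 2)) -> P.-integrable setT (EFin \o g).
Proof.
move=> mg ig2.
apply: (@le_integrable _ _ _ P setT measurableT (EFin \o g) (fun x => (1 + g x ^+ 2)%:E)).
- exact/measurable_EFinP.
- move=> x _ /=; rewrite lee_fin.
  rewrite [X in _ <= X]ger0_norm; last by rewrite addr_ge0 // sqr_ge0.
  rewrite -[g x ^+ 2]real_normK ?num_real //; have := normr_ge0 (g x); nra.
- exact: (integrableD measurableT (integrable_cstP setT 1 measurableT) ig2).
Qed.


Lemma core (g : T -> R) (B : set T) : measurable B -> measurable_fun setT g ->
  P.-integrable setT (EFin \o (fun x => g x ^+ 2)) ->
  (\int[P]_(x in B) (1 + g x)%:E = P B)%E ->
  (\int[P]_(x in B) ((1 + g x) ^+ 2)%:E = P B + \int[P]_(x in B) (g x ^+ 2)%:E)%E.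
Proof.
move=> mB mg ig2 h.
have ig : P.-integrable B (EFin \o g) by apply: integrableS (L2int _ mg ig2).
have ig2B : P.-integrable B (EFin \o (fun x => g x ^+ 2)) by apply: integrableS ig2.
have i1 := integrable_cstP B 1 mB.
have h1 : (\int[P]_(x in B) (1 + g x)%:E = P B + \int[P]_(x in B) (g x)%:E)%E.
  by rewrite (intD _ _ _ mB i1 ig) (int1 _ mB).
have g0 : (\int[P]_(x in B) (g x)%:E = 0)%E.
  have fPB : P B \is a fin_num by rewrite fin_num_measure.
  have fg : (\int[P]_(x in B) (g x)%:E)%E \is a fin_num by exact: integrable_fin_num.
  move: h1; rewrite h -(fineK fPB) -(fineK fg) -EFinD => /eqP; rewrite eqe => /eqP E.
  by congr (_%:E); lra.
have i2 : P.-integrable B (EFin \o (fun x => 2 * g x + g x ^+ 2)).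
  apply: (integrableD mB (integrableZl mB 2 ig) ig2B).
rewrite (eq_integral (fun x => (1 + (2 * g x + g x ^+ 2))%:E)); last first.
  by move=> x _; congr (_%:E); ring.
rewrite (intD _ _ _ mB i1 i2) (int1 _ mB) (intD _ _ _ mB (integrableZl mB 2 ig) ig2B) (intZ _ _ _ mB ig) g0.
by rewrite mule0 add0e.
Qed.

End Helpers.
Arguments intD {d T R}. Arguments intZ {d T R}. Arguments int1 {d T R}. Arguments intc {d T R}.
Arguments integrable_cstP {d T R}. Arguments L2int {d T R}. Arguments core {d T R}.


Section Q.
Context d (T : measurableType d) (R : realType).
Variable P : probability T R.

Lemma Gmeas_sub (G1 G2 : set (set T)) (f : T -> R) :
  (forall A, G1 A -> G2 A) -> Gmeas G1 f -> Gmeas G2 f.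
Proof. by move=> h mf B mB; apply: h; exact: mf. Qed.

Lemma Qfacts (F : R -> set (set T)) (delta : R -> R -> R) (s t : R) (D : T -> R) :
  sigma_algebra setT (F s) -> (forall A, F s A -> measurable A) ->
  sigma_algebra setT (F t) -> (forall A, F t A -> measurable A) ->
  Qset P F delta s t D ->
  [/\ measurable_fun setT D, P.-integrable setT (EFin \o (fun x => D x ^+ 2)),
      (forall A, F s A -> \int[P]_(x in A) (D x)%:E = P A)%E &
      exists Y : T -> R, [/\ Gmeas (F s) Y, (forall x, 0 <= Y x),
         P.-integrable setT (EFin \o Y), {ae P, forall x, Y x <= delta s t ^+ 2} &
         forall B, F s B -> (\int[P]_(x in B) ((D x) ^+ 2)%:E = P B + \int[P]_(x in B) (Y x)%:E)%E]].
Proof.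
move=> sFs Fsm sFt Ftm [mD aeD hD [g [mg ig2 Dg [Y [[mY iY hY] Yle]]]]].
have mDT := Gmeas_meas _ sFt Ftm _ mD.
have mgT := Gmeas_meas _ sFt Ftm _ mg.
have ig := L2int P _ mgT ig2.
have iD2 : P.-integrable setT (EFin \o (fun x => D x ^+ 2)).
  have i1 := integrable_cstP P setT 1 measurableT.
  have := integrableD measurableT i1 (integrableD measurableT (integrableZl measurableT 2 ig) ig2).
  apply: eq_integrable => // x _ /=; rewrite Dg; congr (_%:E); ring.
split => //.
pose Yp := fun x => Num.max (Y x) 0.
have mYT := Gmeas_meas _ sFs Fsm _ mY.
have Yge0 : {ae P, forall x, 0 <= Y x}.
  have H : {ae P, forall x, -1 * Y x <= 0}.
  apply: (ae_le_of_int (F s) sFs Fsm P (fun x => -1 * Y x) 0).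
  - apply/(proj2 (GmeasP _ sFs _)); apply: measurable_funM.
      exact: measurable_cst.
    exact: (proj1 (GmeasP _ sFs _) mY).
  - exact: (integrableZl measurableT (-1) iY).
  - move=> B FB; rewrite (intZ P B Y (-1) (Fsm _ FB) (integrableS measurableT (Fsm _ FB) (subsetT _) iY)).
    rewrite hY // mul0e mulN1e leeNl oppe0; apply: integral_ge0 => x _.
    by rewrite lee_fin sqr_ge0.
  by apply: filterS H => x; rewrite mulN1r oppr_le0.
exists Yp; split.
- apply/(proj2 (GmeasP _ sFs _)); apply: measurable_maxr.
    exact: (proj1 (GmeasP _ sFs _) mY).
  exact: measurable_cst.
- by move=> x; rewrite /Yp le_max lexx orbT.
- apply: (@le_integrable _ _ _ P setT measurableT (EFin \o Yp) (EFin \o Y)) => //.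
  + by apply/measurable_EFinP; apply: measurable_maxr => //; exact: measurable_cst.
  + move=> x _ /=; rewrite lee_fin /Yp.
    by case: (leP (Y x) 0) => h; rewrite ?normr0 ?normr_ge0 //.
- apply: filterS Yle => x h; rewrite /Yp ge_max h sqr_ge0 //.
- move=> B FB.
  have mB := Fsm _ FB.
  rewrite (eq_integral (fun x => ((1 + g x) ^+ 2)%:E)); last by move=> x _; rewrite Dg.
  rewrite core //; last by rewrite -hD //; apply: eq_integral => x _; rewrite Dg.
  rewrite -hY //; congr (_ + _)%E.
  apply: ae_eq_integral => //.
  + by apply/measurable_EFinP; apply: measurable_funTS.
  + by apply/measurable_EFinP; apply: measurable_funTS; apply: measurable_maxr => //; exact: measurable_cst.
  + apply: filterS Yge0 => x h _; rewrite /Yp; congr (_%:E).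
    by apply/esym/max_l.
Qed.

End Q.
Arguments Gmeas_sub {d T R}. Arguments Qfacts {d T R}.


Section GM.
Context d (T : measurableType d) (R : realType).
Variable G : set (set T).
Hypothesis sG : sigma_algebra setT G.

Lemma GmeasM (f g : T -> R) : Gmeas G f -> Gmeas G g -> Gmeas G (fun x => f x * g x).
Proof.
move=> /(GmeasP _ sG) mf /(GmeasP _ sG) mg; apply/(GmeasP _ sG).
exact: measurable_funM.
Qed.

Lemma GmeasD (f g : T -> R) : Gmeas G f -> Gmeas G g -> Gmeas G (fun x => f x + g x).
Proof.
move=> /(GmeasP _ sG) mf /(GmeasP _ sG) mg; apply/(GmeasP _ sG).
exact: measurable_funD.
Qed.

Lemma Gmeas_cst (c : R) : Gmeas G (fun _ : T => c).
Proof. apply/(GmeasP _ sG); exact: measurable_cst. Qed.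

Lemma Gmeas_indic (A : set T) : G A -> Gmeas G (\1_A : T -> R).
Proof.
move=> GA; apply/(GmeasP _ sG); apply: (@measurable_indic _ (g_sigma_algebraType G)).
by rewrite (TG_measE _ sG).
Qed.

Lemma Gmeas_max0 (f : T -> R) : Gmeas G f -> Gmeas G (fun x => Num.max (f x) 0).
Proof.
move=> /(GmeasP _ sG) mf; apply/(GmeasP _ sG).
apply: measurable_maxr => //; exact: measurable_cst.
Qed.

End GM.
Arguments GmeasM {d T R}. Arguments GmeasD {d T R}. Arguments Gmeas_cst {d T R}.
Arguments Gmeas_indic {d T R}. Arguments Gmeas_max0 {d T R}.

Lemma ind_int d (T : measurableType d) (R : realType) (mu : {measure set T -> \bar R})
  (B : set T) (f : T -> R) :
  (\int[mu]_(x in B) (f x)%:E = \int[mu]_x ((\1_B x * f x)%:E))%E.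
Proof.
rewrite integral_mkcond; apply: eq_integral => x _.
by rewrite epatch_indic /= muleC.
Qed.
Arguments ind_int {d T R}.


Lemma indic_ge0 (T : Type) (R : realType) (A : set T) (x : T) : 0 <= (\1_A x : R).
Proof. by rewrite indicE ler0n. Qed.

Lemma part1 d (T : measurableType d) (R : realType) (P : probability T R) (Tend : R)
  (F : R -> set (set T)) (delta : R -> R -> R)
  (hF : is_filtration Tend F)
  (hdelta0 : forall s t, 0 <= s -> s <= t -> t <= Tend -> 0 <= delta s t)
  (hdelta : forall r s t, 0 <= r -> r <= s -> s <= t -> t <= Tend ->
     delta r s * delta s t + delta r s + delta s t = delta r t)
  r s t (hr : 0 <= r) (hrs : r <= s) (hst : s <= t) (ht : t <= Tend)
  (DQ DR : T -> R) :
  Qset P F delta r s DQ -> Qset P F delta s t DR ->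
  Qset P F delta r t (fun x => DQ x * DR x).
Proof.
move=> QQ QR.
case: hF => [hsig [hmeas hmono]].
have hs : 0 <= s by exact: le_trans hrs.
have htt : 0 <= t by exact: le_trans hst.
have hsT : s <= Tend by exact: le_trans ht.
have hrT : r <= Tend by exact: le_trans hsT.
have sFr := hsig r (andb_true_intro (conj hr hrT)).
have sFs := hsig s (andb_true_intro (conj hs hsT)).
have sFt := hsig t (andb_true_intro (conj htt ht)).
have Frm := hmeas r (andb_true_intro (conj hr hrT)).
have Fsm := hmeas s (andb_true_intro (conj hs hsT)).
have Ftm := hmeas t (andb_true_intro (conj htt ht)).
have Frs : forall A, F r A -> F s A := hmono r s hr hrs hsT.
have Fst : forall A, F s A -> F t A := hmono s t hs hst ht.
have [mDQT iDQ2 hDQ [YQ [mYQ YQ0 iYQ YQle hYQ]]] := Qfacts P F delta r s DQ sFr Frm sFs Fsm QQ.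
have [mDRT iDR2 hDR [YR [mYR YR0 iYR YRle hYR]]] := Qfacts P F delta s t DR sFs Fsm sFt Ftm QR.
case: QQ => [mQ aeQ _ _]; case: QR => [mR aeR _ _].
set a := delta r s ^+ 2; set b := delta s t ^+ 2.
have a0 : 0 <= a by exact: sqr_ge0.
have b0 : 0 <= b by exact: sqr_ge0.
pose D := fun x => DQ x * DR x.
have mD : Gmeas (F t) D := GmeasM _ sFt _ _ (Gmeas_sub _ _ _ Fst mQ) mR.
have mDT := Gmeas_meas _ sFt Ftm _ mD.
have mYRT := Gmeas_meas _ sFs Fsm _ mYR.
have mYQT := Gmeas_meas _ sFr Frm _ mYQ.
have sq : forall B, F r B ->
    (\int[P]_(x in B) (D x ^+ 2)%:E <= ((1 + b) * (1 + a))%:E * P B)%E.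
  move=> B FB; have mB := Frm _ FB; have FsB := Frs _ FB.
  pose h := fun x => \1_B x * (DQ x * DQ x).
  have mh : Gmeas (F s) h.
    exact: (GmeasM _ sFs _ _ (Gmeas_indic _ sFs _ FsB) (GmeasM _ sFs _ _ mQ mQ)).
  have mhT := Gmeas_meas _ sFs Fsm _ mh.
  have h0 : forall x, 0 <= h x by move=> x; rewrite /h mulr_ge0 ?indic_ge0 // -expr2 sqr_ge0.
  have E1 : (\int[P]_(x in B) (D x ^+ 2)%:E = \int[P]_x ((h x)%:E * (DR x ^+ 2)%:E))%E.
    by rewrite ind_int; apply: eq_integral => x _; rewrite /h /D -EFinM; congr (_%:E); ring.
  rewrite E1 (key (F s) sFs Fsm P (fun x => DR x ^+ 2) (fun x => 1 + YR x)) //; last 5 first.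
  - exact: measurable_funX.
  - by apply: measurable_funD => //; exact: measurable_cst.
  - by move=> x; exact: sqr_ge0.
  - by move=> x; rewrite addr_ge0 // ler01.
  - move=> C FC; have mC := Fsm _ FC.
    rewrite hYR // intD //; last 2 first.
    + exact: integrable_cstP.
    + exact: integrableS iYR.
    by rewrite int1.
  have fPB : P B \is a fin_num by rewrite fin_num_measure.
  apply: (@le_trans _ _ (\int[P]_x ((h x)%:E * (1 + b)%:E))%E).
    apply: ae_ge0_le_integral => //.
    - by move=> x _; rewrite mule_ge0 // lee_fin // addr_ge0 // ler01.
    - apply: emeasurable_funM; apply/measurable_EFinP => //.
      by apply: measurable_funD => //; exact: measurable_cst.
    - by move=> x _; rewrite mule_ge0 // lee_fin // addr_ge0 // ler01.
    - apply: emeasurable_funM; apply/measurable_EFinP => //; exact: measurable_cst.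
    - by apply: filterS YRle => x hx _; rewrite lee_fin ler_wpM2l // lerD2l.
  rewrite (eq_integral (fun x => (1 + b)%:E * (h x)%:E)%E); last by move=> x _; rewrite muleC.
  rewrite ge0_integralZl //; last 3 first.
  - exact/measurable_EFinP.
  - by move=> x _; rewrite lee_fin.
  - by rewrite lee_fin addr_ge0 // ler01.
  have -> : (\int[P]_x (h x)%:E = \int[P]_(x in B) (DQ x ^+ 2)%:E)%E.
    by rewrite [RHS]ind_int; apply: eq_integral => x _; rewrite /h expr2.
  rewrite hYQ //.
  have iYQB : (\int[P]_(x in B) (YQ x)%:E <= a%:E * P B)%E.
    rewrite -intc //; apply: ae_ge0_le_integral => //.
    - by move=> x _; rewrite lee_fin.
    - exact/measurable_EFinP/measurable_funTS.
    - by apply: filterS YQle => x hx _; rewrite lee_fin.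
  have fY : (\int[P]_(x in B) (YQ x)%:E)%E \is a fin_num.
    by apply: integrable_fin_num => //; exact: integrableS iYQ.
  move: iYQB; rewrite -(fineK fPB) -(fineK fY) -EFinD -!EFinM !lee_fin => iYQB.
  nra.
have FrT : F r setT.
  by case: sFr => h0 hC _; have := hC _ h0; rewrite setD0.
have fPT : P setT \is a fin_num by rewrite fin_num_measure.
have iD2 : P.-integrable setT (EFin \o (fun x => D x ^+ 2)).
  apply/integrableP; split; first exact/measurable_EFinP/measurable_funX.
  rewrite (eq_integral (fun x => (D x ^+ 2)%:E)); last first.
    by move=> x _ /=; rewrite ger0_norm // sqr_ge0.
  apply: le_lt_trans (sq setT FrT) _.
  by rewrite -(fineK fPT) -EFinM ltry.
pose pQ := fun x => Num.max (DQ x) 0.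
pose pR := fun x => Num.max (DR x) 0.
have aQ : {ae P, forall x, DQ x = pQ x}.
  by apply: filterS aeQ => x h; rewrite /pQ; apply/esym/max_l.
have aR : {ae P, forall x, DR x = pR x}.
  by apply: filterS aeR => x h; rewrite /pR; apply/esym/max_l.
have mpQ : Gmeas (F s) pQ := Gmeas_max0 _ sFs _ mQ.
have mpR : Gmeas (F t) pR := Gmeas_max0 _ sFt _ mR.
have mpQT := Gmeas_meas _ sFs Fsm _ mpQ.
have mpRT := Gmeas_meas _ sFt Ftm _ mpR.
have mDQ := Gmeas_meas _ sFs Fsm _ mQ.
have intA : forall A, F r A -> (\int[P]_(x in A) (D x)%:E = P A)%E.
  move=> A FA; have mA := Frm _ FA; have FsA := Frs _ FA.
  rewrite (ae_eq_integral (fun x => (pQ x * pR x)%:E)) //; last 3 first.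
  - exact/measurable_EFinP/measurable_funTS.
  - by apply/measurable_EFinP/measurable_funTS; exact: measurable_funM.
  - by apply: filterS2 aQ aR => x h1 h2 _; rewrite /D h1 h2.
  pose h := fun x => \1_A x * pQ x.
  have mh : Gmeas (F s) h := GmeasM _ sFs _ _ (Gmeas_indic _ sFs _ FsA) mpQ.
  have h0 : forall x, 0 <= h x by move=> x; rewrite /h mulr_ge0 ?indic_ge0 // le_max lexx orbT.
  rewrite ind_int.
  rewrite (eq_integral (fun x => (h x)%:E * (pR x)%:E)%E); last first.
    by move=> x _; rewrite /h -EFinM mulrA.
  rewrite (key (F s) sFs Fsm P pR (fun _ => 1)) //; last 2 first.
  - by move=> x; rewrite le_max lexx orbT.
  - move=> C FC; have mC := Fsm _ FC.
    rewrite int1 // -hDR //; apply: ae_eq_integral => //.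
    + exact/measurable_EFinP/measurable_funTS.
    + exact/measurable_EFinP/measurable_funTS.
    + by apply: filterS aR => x h1 _; rewrite h1.
  rewrite -hDQ // [RHS]ind_int; apply: ae_eq_integral => //.
  - apply: emeasurable_funM; apply/measurable_EFinP => //.
    exact: (Gmeas_meas _ sFs Fsm _ mh).
  - apply/measurable_EFinP; apply: measurable_funM => //.
  - by apply: filterS aQ => x h1 _; rewrite /h h1 -EFinM mulr1.
pose g := fun x => D x + (-1).
have mg : Gmeas (F t) g := GmeasD _ sFt _ _ mD (Gmeas_cst _ sFt _).
have mgT := Gmeas_meas _ sFt Ftm _ mg.
have ig2 : P.-integrable setT (EFin \o (fun x => g x ^+ 2)).
  apply: (@le_integrable _ _ _ P setT measurableT _ (fun x => (2 * D x ^+ 2 + 2)%:E)).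
  - exact/measurable_EFinP/measurable_funX.
  - move=> x _ /=; rewrite lee_fin ger0_norm ?sqr_ge0 // ger0_norm; last first.
      by rewrite addr_ge0 // mulr_ge0 // sqr_ge0.
    rewrite /g; have := sqr_ge0 (D x + 1); nra.
  - exact: (integrableD measurableT (integrableZl measurableT 2 iD2) (integrable_cstP P setT 2 measurableT)).
have [Y [mY iY hY]] := exist_ce (F r) sFr Frm P (fun x => g x ^+ 2)
  (measurable_funX _ mgT) (fun x => sqr_ge0 (g x)) ig2.
split => //.
- by apply: filterS2 aeQ aeR => x h1 h2; exact: mulr_ge0.
- exists g; split => //.
  + by move=> x; rewrite /g /D; ring.
  + exists Y; split => //.
    apply: (ae_le_of_int (F r) sFr Frm P Y (delta r t ^+ 2) mY iY) => B FB.
    have mB := Frm _ FB.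
    rewrite hY //.
    have := core P g B mB mgT ig2.
    rewrite (eq_integral (fun x => (D x)%:E)); last by move=> x _; rewrite /g; congr (_%:E); ring.
    move=> /(_ (intA B FB)).
    rewrite (eq_integral (fun x => (D x ^+ 2)%:E)); last by move=> x _; rewrite /g; congr (_%:E); ring.
    move=> E2; have := sq B FB; rewrite E2.
    have fPB : P B \is a fin_num by rewrite fin_num_measure.
    have fY : (\int[P]_(x in B) (g x ^+ 2)%:E)%E \is a fin_num.
      by apply: integrable_fin_num => //; exact: integrableS ig2.
    have PB0 : (0 <= fine (P B)) by rewrite fine_ge0 // measure_ge0.
    rewrite -(fineK fPB) -(fineK fY) -EFinD -!EFinM !lee_fin => H.
    have hrs0 := hdelta0 r s hr hrs hsT.
    have hst0 := hdelta0 s t hs hst ht.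
    rewrite -(hdelta r s t hr hrs hst ht).
    move: H PB0 hrs0 hst0; rewrite /a /b.
    move: (delta r s) (delta s t) (fine (P B)) (fine _) => x y p q H PB0 hrs0 hst0.
    have Hc : (1 + y ^+ 2) * (1 + x ^+ 2) - 1 <= (x * y + x + y) ^+ 2.
      have h3 : 0 <= x + y + 1 by rewrite !addr_ge0 // ler01.
      have := mulr_ge0 (mulr_ge0 hrs0 hst0) h3; nra.
    have := ler_wpM2r PB0 Hc; nra.
Qed.


Section Split.
Context d (T : measurableType d) (R : realType).
Variable P : probability T R.

Lemma indC (A : set T) (x : T) : \1_A x + \1_(~` A) x = 1 :> R.
Proof. by rewrite !indicE in_setC; case: (x \in A) => /=; rewrite ?addr0 ?add0r. Qed.

Lemma indCM (A : set T) (x : T) : \1_A x * \1_(~` A) x = 0 :> R.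
Proof. by rewrite !indicE in_setC; case: (x \in A) => /=; rewrite ?mulr0 ?mul0r. Qed.

Lemma indK (A : set T) (x : T) : \1_A x * \1_A x = \1_A x :> R.
Proof. by rewrite !indicE; case: (x \in A); rewrite ?mulr0 ?mulr1. Qed.

Lemma integrable_indicM (f : T -> R) (A : set T) : measurable A ->
  P.-integrable setT (EFin \o f) -> P.-integrable setT (EFin \o (fun x => f x * \1_A x)).
Proof.
move=> mA i.
apply: (@le_integrable _ _ _ P setT measurableT _ (EFin \o f)) => //.
- apply/measurable_EFinP; apply: measurable_funM.
    exact/measurable_EFinP/(measurable_int P i).
  exact: measurable_indic.
- move=> x _ /=; rewrite lee_fin normrM indicE.
  by case: (x \in A); rewrite ?normr1 ?mulr1 ?normr0 ?mulr0.
Qed.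

Lemma int_indicM (f : T -> R) (A B : set T) :
  (\int[P]_(x in B) (f x * \1_A x)%:E = \int[P]_(x in B `&` A) (f x)%:E)%E.
Proof.
rewrite ind_int [RHS]ind_int; apply: eq_integral => x _.
by rewrite indicI /=; congr (_%:E); ring.
Qed.

Lemma split_int (f1 f2 : T -> R) (A B : set T) : measurable A -> measurable B ->
  P.-integrable setT (EFin \o f1) -> P.-integrable setT (EFin \o f2) ->
  (\int[P]_(x in B) (f1 x * \1_A x + f2 x * \1_(~` A) x)%:E =
   \int[P]_(x in B `&` A) (f1 x)%:E + \int[P]_(x in B `&` ~` A) (f2 x)%:E)%E.
Proof.
move=> mA mB i1 i2.
rewrite intD //; last 2 first.
- by apply: integrableS (integrable_indicM _ _ mA i1).
- by apply: integrableS (integrable_indicM _ _ (measurableC mA) i2).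
by rewrite !int_indicM.
Qed.

End Split.
Arguments split_int {d T R}. Arguments indC {d T R}. Arguments indCM {d T R}. Arguments indK {d T R}.
Arguments integrable_indicM {d T R}. Arguments int_indicM {d T R}.


Lemma part2 d (T : measurableType d) (R : realType) (P : probability T R) (Tend : R)
  (F : R -> set (set T)) (delta : R -> R -> R)
  (hF : is_filtration Tend F) s t (hs : 0 <= s) (hst : s <= t) (ht : t <= Tend)
  (A : set T) (FA : F s A) (DQ1 DQ2 : T -> R) :
  Qset P F delta s t DQ1 -> Qset P F delta s t DQ2 ->
  Qset P F delta s t (fun x => DQ1 x * \1_A x + DQ2 x * \1_(~` A) x).
Proof.
move=> Q1 Q2.
case: hF => [hsig [hmeas hmono]].
have htt : 0 <= t by exact: le_trans hst.
have hsT : s <= Tend by exact: le_trans ht.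
have sFs := hsig s (andb_true_intro (conj hs hsT)).
have sFt := hsig t (andb_true_intro (conj htt ht)).
have Fsm := hmeas s (andb_true_intro (conj hs hsT)).
have Ftm := hmeas t (andb_true_intro (conj htt ht)).
have Fst : forall A, F s A -> F t A := hmono s t hs hst ht.
have FsI : forall B C, F s B -> F s C -> F s (B `&` C).
  move=> B C FB FC; rewrite -(TG_measE _ sFs); apply: measurableI; by rewrite (TG_measE _ sFs).
have FsC : forall B, F s B -> F s (~` B).
  by move=> B FB; case: sFs => _ hC _; rewrite -setTD; exact: hC.
have FAc := FsC _ FA.
have mA := Fsm _ FA.
case: Q1 => [m1 ae1 h1 [g1 [mg1 ig1 D1g [Y1 [[mY1 iY1 hY1] Y1le]]]]].
case: Q2 => [m2 ae2 h2 [g2 [mg2 ig2 D2g [Y2 [[mY2 iY2 hY2] Y2le]]]]].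
have mg1T := Gmeas_meas _ sFt Ftm _ mg1.
have mg2T := Gmeas_meas _ sFt Ftm _ mg2.
have ig1' := L2int P _ mg1T ig1.
have ig2' := L2int P _ mg2T ig2.
have iD1 : P.-integrable setT (EFin \o DQ1).
  have := integrableD measurableT (integrable_cstP P setT 1 measurableT) ig1'.
  by apply: eq_integrable => // x _ /=; rewrite D1g.
have iD2 : P.-integrable setT (EFin \o DQ2).
  have := integrableD measurableT (integrable_cstP P setT 1 measurableT) ig2'.
  by apply: eq_integrable => // x _ /=; rewrite D2g.
pose g := fun x => g1 x * \1_A x + g2 x * \1_(~` A) x.
pose Y := fun x => Y1 x * \1_A x + Y2 x * \1_(~` A) x.
split.
- apply: GmeasD => //; apply: GmeasM => //; apply: Gmeas_indic => //; exact: Fst.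
- apply: filterS2 ae1 ae2 => x h1x h2x.
  by rewrite addr_ge0 // mulr_ge0 // indicE ler0n.
- move=> B FB; have mB := Fsm _ FB.
  rewrite split_int // h1 ?h2; [|exact: FsI|exact: FsI].
  by rewrite addeC -setDE -measureDI.
- exists g; split.
  + apply: GmeasD => //; apply: GmeasM => //; apply: Gmeas_indic => //; exact: Fst.
  + have := integrableD measurableT (integrable_indicM P _ _ mA ig1)
      (integrable_indicM P _ _ (measurableC mA) ig2).
    apply: eq_integrable => // x _ /=; congr (_%:E).
    by rewrite /g !indicE in_setC; case: (x \in A) => /=; ring.
  + by move=> x; rewrite /g D1g D2g !indicE in_setC; case: (x \in A) => /=; ring.
  + exists Y; split; last first.
      apply: filterS2 Y1le Y2le => x h1x h2x; rewrite /Y !indicE in_setC.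
      by case: (x \in A) => /=; rewrite ?mulr1 ?mulr0 ?addr0 ?add0r.
    split.
    * by apply: GmeasD => //; apply: GmeasM => //; apply: Gmeas_indic.
    * have := integrableD measurableT (integrable_indicM P _ _ mA iY1)
        (integrable_indicM P _ _ (measurableC mA) iY2).
      by apply: eq_integrable => // x _.
    * move=> B FB; have mB := Fsm _ FB.
      rewrite /Y (split_int P Y1 Y2 A B mA mB iY1 iY2).
      rewrite hY1 ?hY2; [|exact: FsI|exact: FsI].
      rewrite -(split_int P (fun x => g1 x ^+ 2) (fun x => g2 x ^+ 2) A B mA mB ig1 ig2).
      apply: eq_integral => x _; rewrite /g; congr (_%:E).
      rewrite !indicE in_setC; case: (x \in A) => /=; ring.
Qed.


Theorem lemma6p6 (d : measure_display) (T : measurableType d) (R : realType)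
  (P : probability T R) (Tend : R) (F : R -> set (set T))
  (delta : R -> R -> R)
  (hF : is_filtration Tend F)
  (hdelta0 : forall s t, 0 <= s -> s <= t -> t <= Tend -> 0 <= delta s t)
  (hdelta : forall r s t, 0 <= r -> r <= s -> s <= t -> t <= Tend ->
     delta r s * delta s t + delta r s + delta s t = delta r t) :
  (forall r s t, 0 <= r -> r <= s -> s <= t -> t <= Tend ->
     forall DQ DR : T -> R,
       Qset P F delta r s DQ -> Qset P F delta s t DR ->
       Qset P F delta r t (fun x => DQ x * DR x)) /\
  (forall s t, 0 <= s -> s <= t -> t <= Tend ->
     forall (A : set T), F s A ->
     forall DQ1 DQ2 : T -> R,
       Qset P F delta s t DQ1 -> Qset P F delta s t DQ2 ->
       Qset P F delta s t (fun x => DQ1 x * \1_A x + DQ2 x * \1_(~` A) x)).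
Proof.
split.
- move=> r s t hr hrs hst ht DQ DR QQ QR.
  exact: (part1 d T R P Tend F delta hF hdelta0 hdelta r s t hr hrs hst ht DQ DR QQ QR).
- move=> s t hs hst ht A FA DQ1 DQ2 Q1 Q2.
  exact: (part2 d T R P Tend F delta hF s t hs hst ht A FA DQ1 DQ2 Q1 Q2).
Qed.
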